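(* (a) Let $K$ be a division ring and $\sigma$ an automorphism of $K$ of finite order $n$ such that no $\sigma^i$ with $1\le i<n$ is an inner automorphism. Then in $K[t;\sigma]$ the set of right roots of $t^n-1$ is exactly $\Delta^\sigma(1)=\{\sigma(x)x^{-1}\mid 0\ne x\in K\}$, and no nonzero polynomial of degree $<n$ in $K[t;\sigma]$ vanishes at every element of $\Delta^\sigma(1)$ (so $t^n-1$ is the minimal polynomial of $\Delta^\sigma(1)$). (b) Let $K$ be a division ring of characteristic $p>0$ and $\delta$ a derivation of $K$ with $\delta^{p^n}=0$ and satisfying no nontrivial identity $\sum_{i=0}^{m}c_i\delta^i=0$ ($c_i\in K$, not all zero) with $m<p^n$. Then in $K[t;\delta]$ the set of right roots of $t^{p^n}$ is exactly $\Delta^\delta(0)=\{\delta(x)x^{-1}\mid 0\ne x\in K\}$, and no nonzero polynomial of degree $<p^n$ vanishes at every element of $\Delta^\delta(0)$.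
   Context: $K[t;\sigma]$ is the skew polynomial ring with $ta=\sigma(a)t$; $K[t;\delta]$ is the differential polynomial ring with $ta=at+\delta(a)$. For $f$ in such a ring $R$ and $a\in K$, $f(a)$ is the unique element of $K$ with $f-f(a)\in R(t-a)$; $a$ is a right root of $f$ if $f(a)=0$. *)

(* Defs.v *)
From HB Require Import structures.
From mathcomp Require Import all_boot all_order all_algebra.
Set Implicit Arguments. Unset Strict Implicit. Unset Printing Implicit Defensive.
Import Order.TTheory GRing.Theory.
Local Open Scope ring_scope.

(* Ore extension K[t; s, d] with  t a = s(a) t + d(a).
   An element sum_i c_i t^i (coefficients on the LEFT) is represented by the
   polynomial with coefficient sequence (c_i), i.e. an element of {poly K}
   used only as an additive group / coefficient container; the ring product
   of {poly K} is NOT the skew product, which is [skmul] below.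
   K[t;sigma] = K[t; sigma, 0], K[t;delta] = K[t; id, delta]. *)

(* left multiplication by t:  t * (sum_j b_j t^j) = sum_j (s(b_j) t^(j+1) + d(b_j) t^j) *)
Definition tmul (K : unitRingType) (s d : K -> K) (g : {poly K}) : {poly K} :=
  'X * \poly_(i < size g) s g`_i + \poly_(i < size g) d g`_i.

Definition skmul (K : unitRingType) (s d : K -> K) (f g : {poly K}) : {poly K} :=
  \sum_(i < size f) (f`_i)%:P * iter (nat_of_ord i) (tmul s d) g.

(* a is a right root of f :  f(a) = 0, i.e. f - 0 \in R (t - a), i.e. f \in R(t - a) *)
Definition rroot (K : unitRingType) (s d : K -> K) (f : {poly K}) (a : K) : Prop :=
  exists q : {poly K}, f = skmul s d q ('X - a%:P).

(* division ring: every nonzero element is a unit (unitRingType is nontrivial) *)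
Definition division_ring (K : unitRingType) : Prop :=
  forall x : K, x != 0 -> x \is a GRing.unit.

Definition inner_aut (K : unitRingType) (f : K -> K) : Prop :=
  exists u : K, u \is a GRing.unit /\ forall x, f x = u * x * u^-1.

Definition derivation (K : unitRingType) (d : K -> K) : Prop :=
  (forall a b, d (a + b) = d a + d b) /\ (forall a b, d (a * b) = d a * b + a * d b).

(* Main.v *)
Require Import Defs.
From HB Require Import structures.
From mathcomp Require Import all_boot all_order all_algebra zify.
Import GRing.Theory.
Local Open Scope ring_scope.
From Stdlib Require Import Classical.
Set Implicit Arguments. Unset Strict Implicit.

Lemma sum_widen (V : zmodType) (F : nat -> V) m n : (m <= n)%N ->
  (forall i, (m <= i)%N -> F i = 0) -> \sum_(i < m) F i = \sum_(i < n) F i.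
Proof.
move=> le F0; rewrite -(subnKC le) big_split_ord /= [X in _ = _ + X]big1 ?addr0 // => i _.
by apply: F0; rewrite leq_addr.
Qed.

Section Ore.
Variables (K : unitRingType) (s d : K -> K).
Hypothesis sD : forall x y, s (x + y) = s x + s y.
Hypothesis sM : forall x y, s (x * y) = s x * s y.
Hypothesis s1 : s 1 = 1.
Hypothesis dD : forall x y, d (x + y) = d x + d y.
Hypothesis dM : forall x y, d (x * y) = d x * y + s x * d y.

Lemma s0 : s 0 = 0.
Proof. have H := sD 0 0; rewrite addr0 in H. by apply: (addrI (s 0)); rewrite -H addr0. Qed.
Lemma d0 : d 0 = 0.
Proof. have H := dD 0 0; rewrite addr0 in H. by apply: (addrI (d 0)); rewrite -H addr0. Qed.
Lemma d1 : d 1 = 0.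
Proof. have H := dM 1 1; rewrite !mulr1 s1 mul1r in H. by apply: (addrI (d 1)); rewrite -H addr0. Qed.

Local Notation T := (tmul s d).

Fixpoint N (k : nat) (a : K) : K :=
  if k is k'.+1 then s (N k' a) * a + d (N k' a) else 1.
Definition ev (f : {poly K}) (a : K) := \sum_(i < size f) f`_i * N i a.

Lemma evE (f : {poly K}) a m : (size f <= m)%N -> ev f a = \sum_(i < m) f`_i * N i a.
Proof. by move=> le; rewrite /ev; apply: (@sum_widen _ (fun i : nat => f`_i * N i a)) => // i H; rewrite nth_default ?mul0r. Qed.

Lemma skE (f g : {poly K}) m : (size f <= m)%N -> skmul s d f g = \sum_(i < m) (f`_i)%:P * iter i T g.
Proof. by move=> le; rewrite /skmul; apply: (@sum_widen _ (fun i : nat => (f`_i)%:P * iter i T g)) => // i H; rewrite nth_default ?mul0r. Qed.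

Lemma coef_polyF (F : K -> K) (g : {poly K}) k : F 0 = 0 ->
  (\poly_(i < size g) F g`_i)`_k = F g`_k.
Proof. by move=> F0; rewrite coef_poly; case: ltnP => // H; rewrite nth_default. Qed.

Lemma coef_tmul (g : {poly K}) k : (T g)`_k = (if k is k'.+1 then s g`_k' else 0) + d g`_k.
Proof. by rewrite /tmul coefD coefXM !coef_polyF ?s0 ?d0 //; case: k. Qed.

Lemma size_tmul (g : {poly K}) : (size (T g) <= (size g).+1)%N.
Proof.
apply/leq_sizeP => -[|j] // H; rewrite coef_tmul !nth_default ?s0 ?d0 ?addr0 //.
by apply: leq_trans H.
Qed.

Lemma tmulD (f g : {poly K}) : T (f + g) = T f + T g.
Proof.
apply/polyP => k; rewrite !(coef_tmul, coefD) dD.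
by case: k => [|k]; rewrite ?add0r // coefD sD addrACA.
Qed.

Lemma tmul0 : T 0 = 0.
Proof. by apply/polyP => k; rewrite coef_tmul coef0 d0; case: k => [|k]; rewrite ?coef0 ?s0 addr0. Qed.

Lemma tmulC c (h : {poly K}) : T (c%:P * h) = (s c)%:P * T h + (d c)%:P * h.
Proof.
apply/polyP => -[|k]; rewrite coef_tmul [RHS]coefD !(coefCM c h) (coefCM (s c)) (coefCM (d c)) coef_tmul /= ?(coefCM c h) dM mulrDr ?sM ?mulr0 ?add0r.
  by rewrite addrC.
by rewrite -addrA (addrC (d c * _)).
Qed.

Lemma tmul_polyC c : T c%:P = (s c)%:P * 'X + (d c)%:P.
Proof.
rewrite -[c%:P]mulr1 tmulC mulr1; congr (_ * _ + _).
apply/polyP => k; rewrite coef_tmul coefX.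
by case: k => [|[|k]] /=; rewrite !coef1 /= ?s1 ?d1 ?s0 ?d0 ?addr0 ?add0r ?mulr0n ?mulr1n ?s1 ?s0 ?d0 ?d1 ?addr0.
Qed.

Lemma tmulXn (k : nat) : T ('X^k : {poly K}) = 'X^(k.+1).
Proof.
have sb (b : bool) : s b%:R = b%:R by case: b; rewrite ?s1 ?s0.
have db (b : bool) : d b%:R = 0 by case: b; rewrite ?d1 ?d0.
apply/polyP => -[|i]; rewrite coef_tmul /= !coefXn db addr0 ?sb ?add0r //.
Qed.

Lemma skmul0 (h : {poly K}) : skmul s d 0 h = 0.
Proof. by rewrite /skmul size_poly0 big_ord0. Qed.

Lemma skmulD (f g h : {poly K}) : skmul s d (f + g) h = skmul s d f h + skmul s d g h.
Proof.
rewrite !(@skE _ _ (maxn (size f) (size g))) ?size_add ?leq_maxl ?leq_maxr //.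
by rewrite -big_split; apply: eq_bigr => i _; rewrite coefD polyCD mulrDl.
Qed.

Lemma skmulC c (f h : {poly K}) : skmul s d (c%:P * f) h = c%:P * skmul s d f h.
Proof.
rewrite !(@skE _ _ (size f)) //; last first.
  by apply/leq_sizeP => j H; rewrite coefCM nth_default ?mulr0.
by rewrite mulr_sumr; apply: eq_bigr => i _; rewrite coefCM polyCM mulrA.
Qed.

Lemma skmul_sum m (F : 'I_m -> {poly K}) h :
  skmul s d (\sum_(i < m) F i) h = \sum_(i < m) skmul s d (F i) h.
Proof. exact: (big_morph (fun q => skmul s d q h) (fun f g => skmulD f g h) (skmul0 h)). Qed.

Lemma skmulPC c (h : {poly K}) : skmul s d c%:P h = c%:P * h.
Proof. by rewrite (@skE _ _ 1) ?size_polyC_leq1 // big_ord1 coefC. Qed.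

Lemma tmul_sum m (F : 'I_m -> {poly K}) : T (\sum_(i < m) F i) = \sum_(i < m) T (F i).
Proof. exact: (big_morph T tmulD tmul0). Qed.

Lemma skmulT (q g : {poly K}) : skmul s d (T q) g = T (skmul s d q g).
Proof.
rewrite (@skE _ _ (size q).+1) ?size_tmul // /skmul tmul_sum.
under eq_bigr => i _ do rewrite coef_tmul polyCD mulrDl.
rewrite big_split /= big_ord_recl /= mul0r add0r big_ord_recr /= nth_default //.
rewrite d0 mul0r addr0 -big_split /=; apply: eq_bigr => i _.
by rewrite tmulC.
Qed.


Lemma ev0 a : ev 0 a = 0.
Proof. by rewrite /ev size_poly0 big_ord0. Qed.

Lemma evD (f g : {poly K}) a : ev (f + g) a = ev f a + ev g a.
Proof.
rewrite !(@evE _ _ (maxn (size f) (size g))) ?size_add ?leq_maxl ?leq_maxr //.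
by rewrite -big_split; apply: eq_bigr => i _; rewrite coefD mulrDl.
Qed.

Lemma evC c (f : {poly K}) a : ev (c%:P * f) a = c * ev f a.
Proof.
rewrite !(@evE _ _ (size f)) //; last first.
  by apply/leq_sizeP => j H; rewrite coefCM nth_default ?mulr0.
by rewrite mulr_sumr; apply: eq_bigr => i _; rewrite coefCM mulrA.
Qed.

Lemma ev_sum m (F : 'I_m -> {poly K}) a :
  ev (\sum_(i < m) F i) a = \sum_(i < m) ev (F i) a.
Proof. exact: (big_morph (fun q => ev q a) (fun f g => evD f g a) (ev0 a)). Qed.

Lemma evN (f : {poly K}) a : ev (- f) a = - ev f a.
Proof.
rewrite /ev size_opp -sumrN; apply: eq_bigr => i _; by rewrite coefN mulNr.
Qed.

Lemma ev_tmul (g : {poly K}) a : ev (T g) a = s (ev g a) * a + d (ev g a).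
Proof.
rewrite (@evE _ _ (size g).+1) ?size_tmul //.
under eq_bigr => i _ do rewrite coef_tmul mulrDl.
rewrite big_split /= big_ord_recl /= mul0r add0r big_ord_recr /= nth_default //.
rewrite d0 mul0r addr0 /ev (big_morph s sD s0) (big_morph d dD d0) mulr_suml.
rewrite -big_split /= -big_split /=; apply: eq_bigr => i _.
rewrite sM dM mulrDr !mulrA -!addrA; congr (_ + _); exact: addrC.
Qed.

Lemma ev_iter (g : {poly K}) a i : ev g a = 0 -> ev (iter i T g) a = 0.
Proof. by move=> H; elim: i => //= i IHi; rewrite ev_tmul IHi s0 d0 mul0r addr0. Qed.

Lemma ev_sk (q g : {poly K}) a : ev g a = 0 -> ev (skmul s d q g) a = 0.
Proof.
by move=> H; rewrite /skmul ev_sum big1 // => i _; rewrite evC ev_iter ?mulr0.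
Qed.

Lemma ev_XsubC a : ev ('X - a%:P) a = 0.
Proof.
rewrite /ev size_XsubC !big_ord_recl big_ord0 /= !coefB coefX coefC /= coefX coefC /=.
by rewrite s1 d1 addr0 mul1r subr0 mul1r sub0r mulr1 addr0 addNr.
Qed.

Lemma ev_Xn k a : ev 'X^k a = N k a.
Proof.
rewrite /ev size_polyXn big_ord_recr /= big1 ?add0r ?coefXn ?eqxx ?mul1r // => i _.
by rewrite coefXn (ltn_eqF (ltn_ord i)) mul0r.
Qed.

Lemma ev1 a : ev 1 a = 1.
Proof. by rewrite /ev size_poly1 big_ord1 coef1 mul1r. Qed.

Fixpoint Qk (k : nat) (a : K) : {poly K} :=
  if k is k'.+1 then T (Qk k' a) + (s (N k' a))%:P else 0.

Lemma Xn_dec k a : 'X^k = skmul s d (Qk k a) ('X - a%:P) + (N k a)%:P.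
Proof.
elim: k => [|k IH] /=; first by rewrite skmul0 add0r expr0.
rewrite -tmulXn IH tmulD skmulD -skmulT tmul_polyC skmulPC.
by rewrite mulrBr polyCD polyCM -!addrA addKr.
Qed.

Lemma f_dec (f : {poly K}) a :
  exists Q, f = skmul s d Q ('X - a%:P) + (ev f a)%:P.
Proof.
exists (\sum_(i < size f) (f`_i)%:P * Qk i a).
rewrite skmul_sum; under eq_bigr => i _ do rewrite skmulC.
rewrite /ev rmorph_sum -big_split /=.
rewrite -{1}[f]coefK poly_def; apply: eq_bigr => i _.
by rewrite -mul_polyC (Xn_dec i a) mulrDr polyCM.
Qed.

Lemma rroot_ev (f : {poly K}) a : rroot s d f a <-> ev f a = 0.
Proof.
split=> [[q ->]|H]; first exact/ev_sk/ev_XsubC.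
by have [Q HQ] := f_dec f a; exists Q; rewrite HQ H addr0.
Qed.

End Ore.

Section PartA.
Variables (K : unitRingType) (sigma : {rmorphism K -> K}) (n : nat).
Hypothesis divK : division_ring K.
Hypothesis bij : bijective sigma.
Hypothesis n_gt0 : (0 < n)%N.
Hypothesis hn : forall x, iter n sigma x = x.
Hypothesis inner : forall i, (1 <= i < n)%N -> ~ inner_aut (iter i sigma).

Lemma iterM i x y : iter i sigma (x * y) = iter i sigma x * iter i sigma y.
Proof. by elim: i => //= i ->; rewrite rmorphM. Qed.
Lemma iter1 i : iter i sigma 1 = 1.
Proof. by elim: i => //= i ->; rewrite rmorph1. Qed.
Lemma iter0 i : iter i sigma 0 = 0.
Proof. by elim: i => //= i ->; rewrite rmorph0. Qed.

Lemma iter_surj i z : exists y, iter i sigma y = z.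
Proof.
case: bij => g fg gf; exists (iter i g z).
elim: i z => //= i IH z; by rewrite -iterS iterSr gf IH.
Qed.

Definition relA (c : nat -> K) := forall x, \sum_(i < n) c i * iter i sigma x = 0.

Lemma indep_k (k : nat) (c : nat -> K) : (#|[set i : 'I_n | c i != 0%R]| <= k)%N -> relA c ->
  forall i, (i < n)%N -> c i = 0.
Proof.
elim: k c => [|k IH] c Hk Hc i Hi.
  apply/eqP; apply: contraTT Hk => H; rewrite -ltnNge card_gt0.
  by apply/set0Pn; exists (Ordinal Hi); rewrite inE.
apply/eqP; apply: contraT => Hci; exfalso.
have ex : exists j, (j < n)%N && (c j != 0) by exists i; rewrite Hi Hci.
case: (ex_minnP ex) => i0 /andP [Hi0 Hc0] Hmin.
set u := c i0; have Uu : u \is a GRing.unit by apply: divK.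
pose c' := fun j => u^-1 * c j.
have Hc' : relA c'.
  move=> x; transitivity (u^-1 * \sum_(i < n) c i * iter i sigma x); last by rewrite Hc mulr0.
  by rewrite mulr_sumr; apply: eq_bigr => j _; rewrite mulrA.
have key : forall y j, (j < n)%N -> c' j * iter j sigma y = iter i0 sigma y * c' j.
  move=> y j Hj; apply/eqP; rewrite -subr_eq0; apply/eqP.
  apply: (IH (fun j => c' j * iter j sigma y - iter i0 sigma y * c' j) _ _ j Hj).
    have oin : Ordinal Hi0 \in [set j : 'I_n | c j != 0] by rewrite inE.
    have Hs : [set j : 'I_n | c' j * iter j sigma y - iter i0 sigma y * c' j != 0]
      \subset [set j : 'I_n | c j != 0] :\ Ordinal Hi0.
      apply/subsetP => j0; rewrite !inE => Hj0; apply/andP; split.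
        apply: contra Hj0 => /eqP -> /=.
        by rewrite /c' /= -/u mulVr // mul1r mulr1 subrr.
      by apply: contra Hj0 => /eqP Hz; rewrite /c' Hz mulr0 mul0r mulr0 subrr.
    apply: leq_trans (subset_leq_card Hs) _.
    by move: Hk; rewrite (cardsD1 (Ordinal Hi0)) oin add1n ltnS.
  move=> x.
  transitivity (\sum_(i < n) c' i * iter i sigma (y * x) - iter i0 sigma y * \sum_(i < n) c' i * iter i sigma x); last by rewrite !Hc' mulr0 subr0.
  by rewrite mulr_sumr -sumrB; apply: eq_bigr => j0 _; rewrite iterM mulrBl !mulrA.
have other : forall j, (j < n)%N -> j != i0 -> c j = 0.
  move=> j Hj Hne; apply/eqP; apply: contraT => Hcj; exfalso.
  have lt : (i0 < j)%N by rewrite ltn_neqAle eq_sym Hne Hmin // Hj Hcj.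
  have cj : c j = u * c' j by rewrite /c' mulrA mulrV // mul1r.
  have Uv : c' j \is a GRing.unit.
    by apply: divK; apply: contra Hcj => /eqP H; rewrite cj H mulr0.
  apply: (inner (i := j - i0)); first by apply/andP; split; lia.
  exists (c' j)^-1; split; first by rewrite unitrV.
  move=> z; have [y <-] := iter_surj i0 z.
  by rewrite -iterD subnK ?(ltnW lt) // invrK -mulrA -(key y j Hj) mulKr.
move: (Hc 1); rewrite (bigD1 (Ordinal Hi0)) //= big1 ?addr0 ?iter1 ?mulr1 => [H0|j Hj].
  by move: Hc0; rewrite /u H0 eqxx.
by rewrite other ?mul0r.
Qed.

Lemma indep (c : nat -> K) : relA c -> forall i, (i < n)%N -> c i = 0.
Proof. by apply: (@indep_k n); rewrite -[X in (_ <= X)%N]card_ord max_card. Qed.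




Local Notation d0 := (fun _ : K => 0 : K).
Let sD : forall x y, sigma (x + y) = sigma x + sigma y. Proof. exact: rmorphD. Qed.
Let sM : forall x y, sigma (x * y) = sigma x * sigma y. Proof. exact: rmorphM. Qed.
Let s1 : sigma 1 = 1. Proof. exact: rmorph1. Qed.
Let dD : forall x y : K, d0 (x + y) = d0 x + d0 y. Proof. by move=> x y; rewrite addr0. Qed.
Let dM : forall x y : K, d0 (x * y) = d0 x * y + sigma x * d0 y.
Proof. by move=> x y; rewrite mul0r mulr0 addr0. Qed.

Lemma Na_form x k : x != 0 -> N sigma d0 k (sigma x * x^-1) = iter k sigma x * x^-1.
Proof.
move=> nz; have Ux := divK nz.
elim: k => [|k IH] /=; first by rewrite mulrV.
rewrite addr0 IH rmorphM -!mulrA; congr (_ * _).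
by rewrite mulrA -rmorphM mulVr // rmorph1 mul1r.
Qed.

Lemma Na_unit a k : a \is a GRing.unit -> N sigma d0 k a \is a GRing.unit.
Proof.
move=> Ua; elim: k => [|k IH] /=; first exact: unitr1.
by rewrite addr0 unitrMl // rmorph_unit.
Qed.

Lemma h90 a : N sigma d0 n a = 1 -> exists x, x != 0 /\ a = sigma x * x^-1.
Proof.
move=> Hn.
have Ua : a \is a GRing.unit.
  apply: divK; apply: contra_eqN Hn => /eqP ->.
  by case: n n_gt0 => //= m _; rewrite mulr0 addr0 eq_sym oner_eq0.
pose M k := (N sigma d0 k a)^-1.
have HM : forall k, sigma (M k) = a * M k.+1.
  move=> k; rewrite /M /= addr0 invrM ?rmorph_unit ?Na_unit //.
  by rewrite mulrA mulrV // mul1r rmorphV ?Na_unit.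
pose z y := \sum_(i < n) M i * iter i sigma y.
have [y Hy] : exists y, z y != 0.
  apply: NNPP => H.
  have Hrel : relA M.
    move=> x; apply/eqP; apply: contraT => Hx; exfalso; apply: H; by exists x.
  have := indep Hrel n_gt0; rewrite /M /= invr1 => /eqP.
  by rewrite oner_eq0.
exists (z y); split => //.
have Uz := divK Hy.
suff E : sigma (z y) = a * z y by rewrite E mulrK.
rewrite /z rmorph_sum.
under eq_bigr => i _ do rewrite rmorphM HM -mulrA -iterS.
rewrite -mulr_sumr; congr (_ * _).
pose F k := M k * iter k sigma y.
have E1 : \sum_(i < n.+1) F i = F 0%N + \sum_(i < n) F i.+1 by rewrite big_ord_recl.
have E2 : \sum_(i < n.+1) F i = \sum_(i < n) F i + F n by rewrite big_ord_recr.
have FE : F n = F 0%N by rewrite /F hn /M Hn /=.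
transitivity (\sum_(i < n) F i.+1) => //.
apply: (addrI (F 0%N)); rewrite -E1 E2 FE addrC //.
Qed.

Lemma partA1 a : rroot sigma d0 ('X^n - 1) a <-> exists x : K, x != 0 /\ a = sigma x * x^-1.
Proof.
rewrite (rroot_ev sD sM s1 dD dM) evD evN ev_Xn ev1.
split; first by move=> /eqP; rewrite subr_eq0 => /eqP; exact: h90.
case=> x [nz ->]; rewrite Na_form // hn mulrV ?subrr //; exact: divK.
Qed.

Lemma partA2 (f : {poly K}) : f != 0 -> (size f <= n)%N ->
  ~ (forall x : K, x != 0 -> rroot sigma d0 f (sigma x * x^-1)).
Proof.
move=> fnz le H.
have Hr : relA (fun i => f`_i).
  move=> x; case: (eqVneq x 0) => [->|nz].
    by apply: big1 => i _; rewrite iter0 mulr0.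
  have := H x nz; rewrite (rroot_ev sD sM s1 dD dM) (evE _ _ _ le).
  under eq_bigr => i _ do rewrite Na_form // mulrA.
  rewrite -mulr_suml => E.
  by rewrite -(divrK (divK nz) (\sum_(i < n) _)) E mul0r.
have := indep Hr (i := (size f).-1).
rewrite -/(lead_coef f) => H0; move/eqP: fnz; apply.
apply/eqP; rewrite -lead_coef_eq0 H0 //.
by case: (size f) le => //= m; apply: leq_ltn_trans.
Qed.

End PartA.

Section PartB.
Variables (K : unitRingType) (delta : K -> K) (P : nat).
Hypothesis divK : division_ring K.
Hypothesis der : derivation delta.
Hypothesis nil : forall x, iter P delta x = 0.
Hypothesis indepB : forall (m : nat) (c : nat -> K), (m < P)%N ->
        (forall x, \sum_(i < m.+1) c i * iter i delta x = 0) ->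
        forall i, (i <= m)%N -> c i = 0.

Let sD : forall x y : K, id (x + y) = id x + id y. Proof. by []. Qed.
Let sM : forall x y : K, id (x * y) = id x * id y. Proof. by []. Qed.
Let s1 : id (1 : K) = 1. Proof. by []. Qed.
Let dD : forall x y, delta (x + y) = delta x + delta y. Proof. exact: der.1. Qed.
Let dM : forall x y, delta (x * y) = delta x * y + id x * delta y. Proof. exact: der.2. Qed.

Lemma dV x : x != 0 -> delta x^-1 = - (x^-1 * delta x * x^-1).
Proof.
move=> nz; have Ux := divK nz.
have H : delta x * x^-1 + x * delta x^-1 = 0 by rewrite -dM mulrV // (d1 s1 dM).
rewrite -(mulKr Ux (delta x^-1)) -mulrA -mulrN; congr (_ * _).
by apply: (addrI (delta x * x^-1)); rewrite H subrr.
Qed.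

Lemma Nb_form x k : x != 0 -> N id delta k (delta x * x^-1) = iter k delta x * x^-1.
Proof.
move=> nz; have Ux := divK nz.
elim: k => [|k IH] /=; first by rewrite mulrV.
rewrite IH dM dV // /=.
by rewrite mulrN !mulrA addrCA subrr addr0.
Qed.

Lemma iterd0 i : iter i delta 0 = 0.
Proof. by elim: i => //= i ->; exact: (d0 dD). Qed.

Lemma partB1 a : rroot id delta ('X^P) a <-> exists x : K, x != 0 /\ a = delta x * x^-1.
Proof.
rewrite (rroot_ev sD sM s1 dD dM) ev_Xn; split; last first.
  by case=> x [nz ->]; rewrite Nb_form // nil mul0r.
move=> HP.
have [k [Hk Hk1]] : exists k, N id delta k a != 0 /\ N id delta k.+1 a = 0.
  elim: P HP => [|m IH] H; first by move: H => /= /eqP; rewrite oner_eq0.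
  case: (eqVneq (N id delta m a) 0) => [/IH //|Hm]; by exists m.
set y := N id delta k a in Hk Hk1.
have Uy := divK Hk.
have Hd : delta y = - (y * a) by apply: (addrI (y * a)); rewrite subrr; exact: Hk1.
exists y^-1; split; first by rewrite invr_eq0.
by rewrite dV // Hd invrK !mulrN !mulNr opprK mulrA mulVr // mul1r divrK.
Qed.

Lemma partB2 (f : {poly K}) : f != 0 -> (size f <= P)%N ->
  ~ (forall x : K, x != 0 -> rroot id delta f (delta x * x^-1)).
Proof.
move=> fnz le H.
have sz : (0 < size f)%N by rewrite size_poly_gt0.
have Hr : forall x, \sum_(i < (size f).-1.+1) f`_i * iter i delta x = 0.
  rewrite prednK // => x; case: (eqVneq x 0) => [->|nz].
    by apply: big1 => i _; rewrite iterd0 mulr0.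
  have := H x nz; rewrite (rroot_ev sD sM s1 dD dM) /ev.
  under eq_bigr => i _ do rewrite Nb_form // mulrA.
  rewrite -mulr_suml => E.
  by rewrite -(divrK (divK nz) (\sum_(i < size f) _)) E mul0r.
have H0 := indepB (m := (size f).-1) (c := fun i => f`_i).
move: fnz; rewrite -lead_coef_eq0 /lead_coef H0 ?eqxx //.
by rewrite prednK.
Qed.

End PartB.

Theorem proposition2p9 :
  (* (a) *)
  (forall (K : unitRingType) (sigma : {rmorphism K -> K}) (n : nat),
     division_ring K ->
     bijective sigma ->
     (0 < n)%N ->
     (forall x, iter n sigma x = x) ->
     (forall i, (0 < i < n)%N -> exists x, iter i sigma x != x) ->
     (forall i, (1 <= i < n)%N -> ~ inner_aut (iter i sigma)) ->
     (forall a : K, rroot sigma (fun _ => 0) ('X^n - 1) a <->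
        exists x : K, x != 0 /\ a = sigma x * x^-1) /\
     (forall f : {poly K}, f != 0 -> (size f <= n)%N ->
        ~ (forall x : K, x != 0 -> rroot sigma (fun _ => 0) f (sigma x * x^-1))))
  /\
  (* (b) *)
  (forall (K : unitRingType) (p : nat) (delta : K -> K) (n : nat),
     division_ring K ->
     p \in [pchar K] ->
     derivation delta ->
     (forall x, iter (p ^ n) delta x = 0) ->
     (forall (m : nat) (c : nat -> K), (m < p ^ n)%N ->
        (forall x, \sum_(i < m.+1) c i * iter i delta x = 0) ->
        forall i, (i <= m)%N -> c i = 0) ->
     (forall a : K, rroot id delta ('X^(p ^ n)) a <->
        exists x : K, x != 0 /\ a = delta x * x^-1) /\
     (forall f : {poly K}, f != 0 -> (size f <= p ^ n)%N ->
        ~ (forall x : K, x != 0 -> rroot id delta f (delta x * x^-1)))).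
Proof.
split.
  move=> K sigma n divK bij n_gt0 hn _ inner; split.
    exact: (partA1 divK bij n_gt0 hn inner).
  exact: (partA2 divK bij n_gt0 inner).
move=> K p delta n divK _ der nil indB; split.
  exact: (partB1 divK der nil).
exact: (partB2 divK der indB).
Qed.
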